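(* Let $p\in\mathbb N$ with $p\ge 6$, and write $p=5k+r$ with $k\in\mathbb N$ and $0\le r\le 4$. If $G$ is a graph on $p$ vertices containing no copy of $T_6^2$, then $e(G)\le 2p-\frac{r(5-r)}{2}$.
   Context: All graphs are finite and simple; a graph ''contains'' $H$ if it has a subgraph isomorphic to $H$; $e(G)$ is the number of edges of $G$. $T_6^2$ is the tree on vertex set $\{v_0,\ldots,v_5\}$ with edges $v_0v_1,v_0v_2,v_0v_3,v_3v_4,v_3v_5$. *)

(* Defs.v *)
From mathcomp Require Import all_boot.
Set Implicit Arguments. Unset Strict Implicit. Unset Printing Implicit Defensive.

Definition simple_graph (T : finType) (e : rel T) : Prop :=
  symmetric e /\ irreflexive e.

Definition edge_set (T : finType) (e : rel T) : {set {set T}} :=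
  [set E : {set T} | [exists x, exists y, e x y && (E == [set x; y])]].

Definition num_edges (T : finType) (e : rel T) : nat := #|edge_set e|.

Definition T62_edges : seq ('I_6 * 'I_6) :=
  [:: (inord 0, inord 1); (inord 0, inord 2); (inord 0, inord 3);
      (inord 3, inord 4); (inord 3, inord 5)].

Definition contains_T62 (T : finType) (e : rel T) : Prop :=
  exists f : 'I_6 -> T, injective f /\
    forall uv, uv \in T62_edges -> e (f uv.1) (f uv.2).

(* Main.v *)
Require Import Defs.
From mathcomp Require Import all_boot zify.
Set Implicit Arguments. Unset Strict Implicit. Unset Printing Implicit Defensive.

Lemma ar1 a b c : a <= 2 -> b <= 2 -> c <= 3 * 2 -> 4 + (a + (b + c)) + 6 <= 4 * 5.
Proof. lia. Qed.
Lemma ar2 a b c : c <= 3 * 3 -> a <= 2 -> b <= 3 -> b + (4 + (a + c)) + 6 <= 4 * (true + 5).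
Proof. simpl; lia. Qed.
Lemma ar3 a b c d : c <= 3 * 3 -> a <= 2 -> b <= 4 -> d <= 3 ->
  d + (b + (4 + (a + c))) + 6 <= 4 * (true + (true + 5)).
Proof. simpl; lia. Qed.

Lemma ar4 a b : 4 < a -> b <= 3 * a -> 0 + b + 6 <= 4 * (true + a).
Proof. simpl; lia. Qed.
Lemma ar5 a b : 6 <= a -> b <= 3 * a -> b + 6 <= 4 * a.
Proof. lia. Qed.

Section G.
Variable T : finType.
Variable e : rel T.
Hypothesis esym : symmetric e.
Hypothesis eirr : irreflexive e.
Hypothesis noT : ~ contains_T62 e.

Lemma core (u v a1 a2 b1 b2 : T) : e u v -> e u a1 -> e u a2 -> e v b1 -> e v b2 ->
  uniq [:: u; a1; a2; v; b1; b2] -> False.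
Proof.
move=> euv e1 e2 e3 e4 U; apply: noT.
exists (fun i : 'I_6 => nth u [:: u; a1; a2; v; b1; b2] i); split.
  move=> i j /eqP; rewrite nth_uniq // => /eqP; exact: ord_inj.
move=> uv; rewrite !inE => H.
by repeat case/orP: H => [/eqP-> /=|H]; rewrite ?inordK //; move/eqP: H -> => /=; rewrite !inordK.
Qed.

Definition N (S : {set T}) v := [set w in S | e v w].

Lemma neq_of_e x y : e x y -> x != y.
Proof. by apply: contraTneq => ->; rewrite eirr. Qed.

Lemma core2 S u v a1 a2 b1 b2 : e u v -> a1 \in N S u :\ v -> a2 \in N S u :\ v ->
  b1 \in N S v :\ u -> b2 \in N S v :\ u -> a1 != a2 -> b1 != b2 ->
  a1 != b1 -> a1 != b2 -> a2 != b1 -> a2 != b2 -> False.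
Proof.
move=> euv; rewrite !inE => /and3P[a1v _ ea1] /and3P[a2v _ ea2] /and3P[b1u _ eb1]
  /and3P[b2u _ eb2] n12 m12 n11 n12' n21 n22.
apply: (core euv ea1 ea2 eb1 eb2).
have := neq_of_e ea1; have := neq_of_e ea2; have := neq_of_e eb1; have := neq_of_e eb2;
have := neq_of_e euv.
rewrite /= !inE !negb_or.
move=> uv vb2 vb1 ua2 ua1.
rewrite uv ua1 ua2 eq_sym b1u eq_sym b2u /=.
rewrite n12 a1v n11 n12' a2v n21 n22 /=.
by rewrite vb1 vb2 m12.
Qed.

Lemma hall S u v : e u v -> 1 < #|N S v :\ u| -> 1 < #|N S u :\ v| ->
  3 < #|(N S u :\ v) :|: (N S v :\ u)| -> False.
Proof.
set A := N S u :\ v; set B := N S v :\ u => euv hB hA hU.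
have cU : #|A :|: B| = #|A| + #|B :\: A|.
  by rewrite cardsU cardsD setIC; have := subset_leq_card (subsetIl B A); lia.
case: (ltnP 1 #|B :\: A|) => h1.
  case/card_gt1P: h1 => b1 [b2 [] ]; move=> /setDP[b1B nb1] /setDP[b2B nb2] d.
  case/card_gt1P: hA => a1 [a2 [] a1A a2A da].
  have ne x y : x \in A -> y \notin A -> x != y by move=> xA; apply: contraNneq => <-.
  by apply: (core2 euv a1A a2A b1B b2B da d); apply: ne.
case: (posnP #|B :\: A|) => h0.
  have sBA : B \subset A.
    apply/subsetP => x xB; apply: contraT => xA.
    have : 0 < #|B :\: A| by apply/card_gt0P; exists x; rewrite inE xA.
    by rewrite h0.
  case/card_gt1P: hB => b1 [b2 [] b1B b2B d].
  have : 1 < #|A :\ b1 :\ b2|.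
    have b1A := subsetP sBA _ b1B; have b2A := subsetP sBA _ b2B.
    have b2A' : b2 \in A :\ b1 by rewrite in_setD1 eq_sym d.
    by move: (cardsD1 b1 A) (cardsD1 b2 (A :\ b1)); rewrite b1A b2A' /=; lia.
  case/card_gt1P => a1 [a2 []]; move=> /setD1P[a1b2 /setD1P[a1b1 a1A]] /setD1P[a2b2 /setD1P[a2b1 a2A]] da.
  exact: (core2 euv a1A a2A b1B b2B da d).
have h1' : #|B :\: A| = 1 by lia.
have /card_gt0P [b1] : 0 < #|B :\: A| by lia.
move/setDP => [b1B b1A].
have : 0 < #|B :\ b1| by move: (cardsD1 b1 B); rewrite b1B /=; lia.
case/card_gt0P => b2; move/setD1P => [d b2B].
have : 1 < #|A :\ b2| by move: (cardsD1 b2 A); lia.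
case/card_gt1P => a1 [a2 []]; move=> /setD1P[a1b2 a1A] /setD1P[a2b2 a2A] da.
apply: (core2 euv a1A a2A b1B b2B da _ _ a1b2 _ a2b2); first by rewrite eq_sym.
- by apply: contraNneq b1A => <-.
- by apply: contraNneq b1A => <-.
Qed.

Definition deg S v := #|N S v|.

Lemma inN S v w : (w \in N S v) = (w \in S) && e v w.
Proof. by rewrite inE. Qed.

Lemma cD1 (A : {set T}) a : #|A| <= (#|A :\ a|).+1.
Proof. by rewrite (cardsD1 a A); case: (a \in A). Qed.

Lemma cD1in (A : {set T}) a : a \in A -> #|A| = (#|A :\ a|).+1.
Proof. by move=> aA; rewrite (cardsD1 a A) aA. Qed.

Lemma U1 S u v : 4 < deg S u -> v \in S -> e u v -> 2 < deg S v -> False.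
Proof.
move=> hu vS euv hv.
have vN : v \in N S u by rewrite inN vS euv.
have h1 := cD1 (N S v) u; have h2 := cD1in vN.
rewrite /deg in hu hv.
apply: (hall (S := S) euv).
- by rewrite -ltnS; apply: leq_trans hv h1.
- by rewrite -ltnS -h2; apply: leq_trans hu.
- apply: leq_trans (subset_leq_card (subsetUl _ _)).
  by rewrite -ltnS -h2.
Qed.

Lemma U2 S u v y : 3 < deg S u -> v \in S -> e u v -> 2 < deg S v ->
  y \in N S v -> y != u -> y \notin N S u -> False.
Proof.
move=> hu vS euv hv yv yu ynu.
have vN : v \in N S u by rewrite inN vS euv.
have h1 := cD1 (N S v) u; have h2 := cD1in vN.
rewrite /deg in hu hv.
apply: (hall (S := S) euv).
- by rewrite -ltnS; apply: leq_trans hv h1.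
- by rewrite -ltnS -h2; apply: leq_trans hu.
- have yB : y \in N S v :\ u by rewrite in_setD1 yu yv.
  have yA : y \notin N S u :\ v by rewrite in_setD1 negb_and ynu orbT.
  have sub : y |: (N S u :\ v) \subset (N S u :\ v) :|: (N S v :\ u).
    by apply/subsetP => x; rewrite in_setU1 in_setU => /orP[/eqP->|->]; rewrite ?yB ?orbT.
  apply: leq_trans (subset_leq_card sub); rewrite cardsU1 yA add1n ltnS.
  by rewrite -ltnS -h2.
Qed.


Lemma degE S v : deg S v = \sum_(w in S) e v w.
Proof.
rewrite /deg -sum1_card [LHS]big_mkcond [RHS]big_mkcond /=.
apply: eq_bigr => w _; rewrite inN; by case: (w \in S); case: (e v w).
Qed.

Lemma reweight (S : {set T}) (f c : T -> T -> nat) :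
  (forall v w, f v w = f w v) -> (forall v w, c v w + c w v = 2) ->
  \sum_(v in S) \sum_(w in S) f v w = \sum_(v in S) \sum_(w in S) f v w * c v w.
Proof.
move=> fs cs; apply/eqP; rewrite -(eqn_pmul2l (isT : 0 < 2)); apply/eqP.
have E : \sum_(v in S) \sum_(w in S) f v w * c v w =
         \sum_(v in S) \sum_(w in S) f v w * c w v.
  rewrite exchange_big /=; apply: eq_bigr => v _; apply: eq_bigr => w _.
  by rewrite fs.
symmetry; rewrite mul2n -addnn.
rewrite {2}E -big_split /= big_distrr /=.
apply: eq_bigr => v _; rewrite -big_split big_distrr /=; apply: eq_bigr => w _.
by rewrite -mulnDr cs mulnC.
Qed.

Lemma sum_le_const (A : {set T}) (L : T -> nat) c :
  (forall v, v \in A -> L v <= c) -> \sum_(v in A) L v <= c * #|A|.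
Proof.
move=> H; rewrite mulnC -sum_nat_const; exact: leq_sum.
Qed.

Lemma qbound (S Q : {set T}) (L : T -> nat) k : Q \subset S ->
  (forall v, v \in S -> L v <= 4) -> \sum_(v in Q) L v + k <= 4 * #|Q| ->
  \sum_(v in S) L v + k <= 4 * #|S|.
Proof.
move=> QS H HQ; rewrite (big_setID Q) /= (setIidPr QS) -(cardsID Q S) (setIidPr QS).
have : \sum_(v in S :\: Q) L v <= 4 * #|S :\: Q|.
  by apply: sum_le_const => v; rewrite inE => /andP[_]; apply: H.
lia.
Qed.

Definition Dsum (S : {set T}) := \sum_(v in S) deg S v.

Lemma Dsplit (S A : {set T}) : A \subset S ->
  (forall x y, x \in A -> y \in S -> e x y -> y \in A) ->
  Dsum S = Dsum A + Dsum (S :\: A).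
Proof.
move=> AS cl; rewrite /Dsum (big_setID A) /= (setIidPr AS); congr (_ + _).
  apply: eq_bigr => v vA; apply: eq_card => w; rewrite !inN.
  case E: (e v w); rewrite ?andbF ?andbT //.
  apply/idP/idP; last exact: (subsetP AS).
  by move=> wS; apply: cl E.
apply: eq_bigr => v; rewrite inE => /andP[vA vS]; apply: eq_card => w; rewrite !inN inE.
case E: (e v w); rewrite ?andbF ?andbT //.
case wA: (w \in A) => //=.
by rewrite esym in E; rewrite (cl _ _ wA vS E) in vA.
Qed.

Definition hh n := (n %% 5) * (5 - n %% 5).

Lemma hh_sub a b : hh (a + b) <= hh a + hh b.
Proof.
rewrite /hh -modnDm.
have : a %% 5 < 5 by rewrite ltn_pmod.
have : b %% 5 < 5 by rewrite ltn_pmod.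
move: (a %% 5) (b %% 5) => x y.
by move=> hy hx; case: y hy => [|[|[|[|[|y]]]]] // _; case: x hx => [|[|[|[|[|x]]]]].
Qed.

Lemma small (S : {set T}) : #|S| <= 5 -> Dsum S + hh #|S| <= 4 * #|S|.
Proof.
move=> h.
have : Dsum S <= (#|S|.-1) * #|S|.
  apply: sum_le_const => v vS; rewrite /deg.
  have sub : N S v \subset S :\ v.
    by apply/subsetP => w; rewrite inN in_setD1 => /andP[-> /neq_of_e]; rewrite eq_sym => ->.
  by apply: leq_trans (subset_leq_card sub) _; rewrite (cD1in vS).
rewrite /hh; move: #|S| h => n.
case: n => [|[|[|[|[|[|n]]]]]] //= _; rewrite ?addn0; lia.
Qed.


Definition huge (S : {set T}) w : bool := 4 < deg S w.
Definition cc (S : {set T}) v w := (1 + huge S w) - huge S v.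
Definition load (S : {set T}) v := \sum_(w in S) e v w * cc S v w.

Lemma Dsum_load (S : {set T}) : Dsum S = \sum_(v in S) load S v.
Proof.
rewrite /Dsum /load; under eq_bigr => v _ do rewrite degE.
apply: reweight => v w; first by rewrite esym.
by rewrite /cc; case: (huge S v); case: (huge S w).
Qed.

Lemma nbr_nothuge (S : {set T}) v w : v \in S -> w \in S -> e v w -> 2 < deg S v -> ~~ huge S w.
Proof.
move=> vS wS evw hv; apply/negP => hw.
by apply: (U1 hw vS _ hv); rewrite esym.
Qed.

Lemma load_huge (S : {set T}) v : v \in S -> huge S v -> load S v = 0.
Proof.
move=> vS hv; apply: big1 => w wS; case E: (e v w) => //=.
have nw : ~~ huge S w.
  by apply/negP => hw; apply: (U1 hv wS E); apply: leq_trans _ hw.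
by rewrite /cc (negbTE nw) hv.
Qed.

Lemma load_le4 (S : {set T}) v : v \in S -> load S v <= 4.
Proof.
move=> vS; case hv: (huge S v); first by rewrite load_huge.
case: (ltnP 2 (deg S v)) => dv.
  have -> : load S v = deg S v.
    rewrite degE; apply: eq_bigr => w wS; case E: (e v w) => //=.
    by rewrite /cc hv (negbTE (nbr_nothuge vS wS E dv)).
  by move: hv; rewrite /huge => /negbT; rewrite -leqNgt.
apply: (@leq_trans (2 * deg S v)); last by lia.
rewrite degE big_distrr /=; apply: leq_sum => w _.
by rewrite /cc hv subn0; case: (e v w); case: (huge S w).
Qed.

Lemma load_nohuge (S : {set T}) v : (forall w, w \in S -> ~~ huge S w) -> v \in S -> load S v = deg S v.
Proof.
move=> H vS; rewrite degE; apply: eq_bigr => w wS.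
by rewrite /cc (negbTE (H _ wS)) (negbTE (H _ vS)) muln1.
Qed.

Lemma load_one (S : {set T}) x z : (forall w, w \in S -> huge S w -> w = x) -> z \in S -> z != x ->
  load S z <= deg S z + 1.
Proof.
move=> H zS zx.
have nz : ~~ huge S z by apply/negP => /(H _ zS) /eqP; rewrite (negbTE zx).
rewrite degE.
apply: (@leq_trans (\sum_(w in S) (e z w + (w == x)))).
  apply: leq_sum => w wS; rewrite /cc (negbTE nz) subn0.
  case hw: (huge S w); last by rewrite addn0 muln1 leq_addr.
  by rewrite (H _ wS hw) eqxx; case: (e z x).
rewrite big_split /= leq_add2l.
apply: (@leq_trans (\sum_w (w == x : nat))).
  by rewrite [X in X <= _]big_mkcond /=; apply: leq_sum => w _; case: (w \in S).
by rewrite (bigD1 x) //= eqxx big1 // => w /negbTE ->.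
Qed.


Lemma NsubS (S : {set T}) v : N S v \subset S.
Proof. by apply/subsetP => w; rewrite inN => /andP[]. Qed.

Lemma notinN (S : {set T}) v : v \notin N S v.
Proof. by rewrite inN eirr andbF. Qed.

Lemma C3 (S : {set T}) u w z :
  (forall v, v \in S -> deg S v <= 4) -> u \in S -> deg S u = 4 -> w \in N S u ->
  z \in S -> z \notin u |: N S u -> e w z ->
  \sum_(v in S) deg S v + 6 <= 4 * #|S|.
Proof.
move=> H4 uS du wN zS zQ ewz.
have /andP[wS euw] : (w \in S) && e u w by rewrite -inN.
move: (zQ); rewrite in_setU1 negb_or => /andP[zu zNu].
have d4 : 3 < deg S u by rewrite du.
have dw : deg S w <= 2.
  rewrite leqNgt; apply/negP => hw.
  by apply: (U2 d4 wS euw hw _ zu zNu); rewrite inN zS ewz.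
have Nw : forall y, y \in N S w -> (y == u) || (y == z).
  move=> y yN.
  have sub : [set u; z] \subset N S w.
    by apply/subsetP => t; rewrite !inE => /orP[]/eqP->; rewrite ?uS ?zS ?ewz // esym euw.
  have : [set u; z] == N S w.
    by rewrite eqEcard sub cards2 eq_sym zu; apply: leq_trans dw _.
  by move/eqP => E; rewrite -E !inE in yN.
have inc : forall x, x \in N S u -> 2 < deg S x -> N S x \subset u |: N S u.
  move=> x xN hx; have /andP[xS eux] : (x \in S) && e u x by rewrite -inN.
  apply/subsetP => y yx; rewrite in_setU1; case: (boolP (y == u)) => //= yu.
  apply: contraT => ynu; exfalso; exact: (U2 d4 xS eux hx yx yu ynu).
have notw : forall x, x \in N S u -> w \notin N S x.
  move=> x xN; apply/negP => wx.
  have /andP[xS eux] : (x \in S) && e u x by rewrite -inN.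
  have /andP[_ exw] : (w \in S) && e x w by rewrite -inN.
  have : x \in N S w by rewrite inN xS esym.
  move/Nw => /orP[]/eqP E.
    by rewrite E eirr in eux.
  by rewrite -E xN in zNu.
have c3 : #|N S u :\ w| = 3 by move: du; rewrite /deg (cD1in wN) => [[]].
have d3 : forall x, x \in N S u :\ w -> deg S x <= 3.
  move=> x xin; move: (xin) => /setD1P[xw xN]; rewrite leqNgt; apply/negP=> hx.
  have sub : N S x \subset u |: ((N S u :\ w) :\ x).
    apply/subsetP => y yx; have := subsetP (inc x xN (ltnW hx)) y yx.
    rewrite !in_setU1 !in_setD1 => /orP[->//|yN]; rewrite yN andbT.
    have /andP[_ exy] : (y \in S) && e x y by rewrite -inN.
    apply/orP; right; apply/andP; split; first by rewrite eq_sym (neq_of_e exy).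
    by apply: (contraNneq _ (notw x xN)) => E; rewrite -E.
  have cB : #|(N S u :\ w) :\ x| = 2 by move: (cD1in xin); rewrite c3 => [[]].
  have := subset_leq_card sub; rewrite cardsU1 cB -/(deg S x) => h.
  have : deg S x <= 3 by apply: leq_trans h _; case: (u \notin _).
  by rewrite leqNgt hx.
have uNu : u \notin N S u by apply: notinN.
have QS : u |: N S u \subset S.
  by apply/subsetP => t; rewrite in_setU1 => /orP[/eqP->//|]; apply: (subsetP (NsubS S u)).
have sQ : \sum_(v in u |: N S u) deg S v = deg S u + (deg S w + \sum_(v in N S u :\ w) deg S v).
  by rewrite big_setU1 //= (big_setD1 _ wN).
have cQ : #|u |: N S u| = 5 by rewrite cardsU1 uNu -/(deg S u) du.
case: (boolP [exists x in N S u :\ w, deg S x <= 2]).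
  case/existsP => x /andP[xin dx].
  apply: (qbound (Q := u |: N S u)) => //.
  rewrite sQ (big_setD1 _ xin) cQ /=.
  have c2 : #|(N S u :\ w) :\ x| = 2 by move: (cD1in xin); rewrite c3 => [[]].
  have : \sum_(v in (N S u :\ w) :\ x) deg S v <= 3 * #|(N S u :\ w) :\ x|.
    by apply: sum_le_const => v /setD1P[_]; apply: d3.
  rewrite c2 du; move: dw dx; move: (deg S w) (deg S x) (\sum_(v in (N S u :\ w) :\ x) deg S v).
  by apply: ar1.
move/existsPn => H3.
have big3 : forall x, x \in N S u :\ w -> 2 < deg S x.
  by move=> x xin; have := H3 x; rewrite xin /= ltnNge.
have rest : \sum_(v in N S u :\ w) deg S v <= 3 * 3.
  by rewrite -{2}c3; apply: sum_le_const.
case: (ltnP 3 (deg S z)) => dz; last first.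
  apply: (qbound (Q := z |: (u |: N S u))) => //.
    by apply/subsetP => t; rewrite in_setU1 => /orP[/eqP->//|]; apply: (subsetP QS).
  rewrite big_setU1 //= sQ cardsU1 zQ cQ du; move: rest dw dz.
  move: (deg S w) (deg S z) (\sum_(v in N S u :\ w) deg S v).
  by apply: ar2.
have wNz : w \in N S z by rewrite inN wS esym.
have : 0 < #|N S z :\ w| by rewrite -ltnS -(cD1in wNz); apply: leq_trans _ dz.
case/card_gt0P => p /setD1P[pw pN].
have /andP[pS ezp] : (p \in S) && e z p by rewrite -inN.
have pnot : p \notin z |: (u |: N S u).
  rewrite !in_setU1 !negb_or; apply/and3P; split.
  - by rewrite eq_sym (neq_of_e ezp).
  - by apply/negP => /eqP pu; rewrite pu in ezp; rewrite inN zS esym ezp in zNu.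
  - apply/negP => pNu.
    have pin : p \in N S u :\ w by rewrite in_setD1 pw pNu.
    have := subsetP (inc p pNu (big3 p pin)) z; rewrite inN zS esym ezp => /(_ isT).
    by rewrite (negbTE zQ).
have dp : deg S p <= 3.
  rewrite leqNgt; apply/negP => hp.
  apply: (U2 hp zS _ _ wNz _ _); first by rewrite esym.
  - by apply: leq_trans dz.
  - by rewrite eq_sym.
  apply/negP => wp.
  have /andP[_ epw] : (w \in S) && e p w by rewrite -inN.
  have : p \in N S w by rewrite inN pS esym.
  move/Nw; move: pnot; rewrite !in_setU1 !negb_or => /and3P[pz pu _].
  by rewrite (negbTE pz) (negbTE pu).
have zS' : z \in S := zS.
apply: (qbound (Q := p |: (z |: (u |: N S u)))) => //.
  apply/subsetP => t; rewrite !in_setU1 => /orP[/eqP->//|/orP[/eqP->//|]].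
  by move=> h; apply: (subsetP QS); rewrite in_setU1.
rewrite big_setU1 //= big_setU1 //= sQ cardsU1 pnot cardsU1 zQ cQ du.
move: rest dw (H4 z zS) dp.
move: (deg S w) (deg S z) (\sum_(v in N S u :\ w) deg S v) (deg S p).
by apply: ar3.
Qed.


Lemma conn (S : {set T}) : 6 <= #|S| ->
  (forall u, u \in S -> deg S u = 4 ->
     exists w z, [/\ w \in N S u, z \in S, z \notin u |: N S u & e w z]) ->
  Dsum S + 6 <= 4 * #|S|.
Proof.
move=> h6 Hc; rewrite Dsum_load.
have L4 : forall v, v \in S -> load S v <= 4 by move=> v; apply: load_le4.
case: (boolP [exists x in S, huge S x]) => [/existsP [x /andP[xS hx]] | nh].
  case: (boolP [exists y in S, (y != x) && huge S y]) => [/existsP [y /and3P[yS yx hy]] | nh2].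
    apply: (qbound (Q := [set y; x])) => //.
      by apply/subsetP => t; rewrite !inE => /orP[]/eqP->.
    by rewrite big_setU1 ?inE //= big_set1 !load_huge // cards2 yx.
  have H : forall w, w \in S -> huge S w -> w = x.
    move=> w wS hw; apply/eqP; apply: contraT => wx.
    by move/existsPn: nh2 => /(_ w); rewrite wS wx hw.
  have QS : x |: N S x \subset S.
    by apply/subsetP => t; rewrite in_setU1 => /orP[/eqP->//|]; apply: (subsetP (NsubS S x)).
  apply: (qbound (Q := x |: N S x)) => //.
  rewrite big_setU1 ?notinN //= load_huge // cardsU1 notinN add0n.
  have : \sum_(v in N S x) load S v <= 3 * #|N S x|.
    apply: sum_le_const => z zN.
    have /andP[zS exz] : (z \in S) && e x z by rewrite -inN.
    have dz : deg S z <= 2.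
      by rewrite leqNgt; apply/negP => hz; apply: (U1 hx zS exz hz).
    apply: leq_trans (load_one H zS _) _; first by rewrite eq_sym (neq_of_e exz).
    by rewrite addn1.
  move: hx; rewrite /huge /deg; move: (#|N S x|) (\sum_(v in N S x) load S v) => a b.
  by move=> ha hb; apply: ar4.
have nh' : forall w, w \in S -> ~~ huge S w.
  by move=> w wS; apply/negP => hw; move/existsPn: nh => /(_ w); rewrite wS hw.
rewrite (eq_bigr (deg S)); last by move=> v vS; apply: load_nohuge.
have H4 : forall v, v \in S -> deg S v <= 4.
  by move=> v vS; have := nh' v vS; rewrite /huge -leqNgt.
case: (boolP [exists u in S, deg S u == 4]) => [/existsP [u /andP[uS /eqP du]] | n4].
  have [w [z [wN zS zQ ewz]]] := Hc u uS du.
  exact: (C3 H4 uS du wN zS zQ ewz).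
have : \sum_(v in S) deg S v <= 3 * #|S|.
  apply: sum_le_const => v vS.
  have := H4 v vS; move/existsPn: n4 => /(_ v); rewrite vS /=.
  by rewrite leq_eqVlt => /negbTE -> .
by move: h6; move: (#|S|) (\sum_(v in S) deg S v) => a b ha hb; apply: ar5.
Qed.


Lemma hh_le6 n : hh n <= 6.
Proof.
rewrite /hh; have : n %% 5 < 5 by rewrite ltn_pmod.
by move: (n %% 5) => r; case: r => [|[|[|[|[|r]]]]].
Qed.

Lemma mainS : forall n (S : {set T}), #|S| <= n -> Dsum S + hh #|S| <= 4 * #|S|.
Proof.
elim=> [|n IH] S hS; first by apply: small; apply: leq_trans hS _.
case: (leqP #|S| 5) => h5; first exact: small.
case: (boolP [exists u in S, (deg S u == 4) &&
   [forall x in N S u, forall y in S, e x y ==> (y \in u |: N S u)]]).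
  case/exists_inP => u uS /andP[/eqP du /forall_inP cl].
  set A := u |: N S u.
  have AS : A \subset S.
    by apply/subsetP => t; rewrite in_setU1 => /orP[/eqP->//|]; apply: (subsetP (NsubS S u)).
  have clA : forall x y, x \in A -> y \in S -> e x y -> y \in A.
    move=> x y; rewrite in_setU1 => /orP[/eqP-> yS euy|xN yS exy].
      by rewrite in_setU1 inN yS euy orbT.
    by move: (cl x xN) => /forallP /(_ y); rewrite yS exy.
  have cA : #|A| = 5 by rewrite cardsU1 notinN -/(deg S u) du.
  have cS : #|A| + #|S :\: A| = #|S| by rewrite -(cardsID A S) (setIidPr AS).
  rewrite (Dsplit AS clA) -cS.
  have IA := IH A ltac:(rewrite cA; move: hS h5 cS; lia).
  have IB := IH (S :\: A) ltac:(move: hS h5 cS; lia).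
  have := hh_sub #|A| #|S :\: A|.
  move: IA IB; move: (Dsum A) (Dsum (S :\: A)) (hh #|A|) (hh #|S :\: A|) (hh (#|A| + #|S :\: A|)).
  move=> a b c d f; lia.
move=> nb.
have Hc : forall u, u \in S -> deg S u = 4 ->
     exists w z, [/\ w \in N S u, z \in S, z \notin u |: N S u & e w z].
  move=> u uS du; move/existsPn: nb => /(_ u); rewrite uS du eqxx /=.
  case/forall_inPn => x xN /forall_inPn [y yS]; rewrite negb_imply => /andP[exy yA].
  by exists x, y.
have := conn h5 Hc; have := hh_le6 #|S|.
move: (Dsum S) (hh #|S|) (#|S|) => a b c; lia.
Qed.

Lemma edge_card E : E \in edge_set e -> #|E| = 2.
Proof.
rewrite inE => /existsP [x /existsP [y /andP[exy /eqP->]]].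
by rewrite cards2 (neq_of_e exy).
Qed.

Lemma deg_edges v : #|[set E in edge_set e | v \in E]| = #|N setT v|.
Proof.
have -> : [set E in edge_set e | v \in E] = [set [set v; w] | w in N setT v].
  apply/setP => E; rewrite inE; apply/andP/imsetP.
    case; rewrite inE => /existsP [x /existsP [y /andP[exy /eqP->]]].
    rewrite !inE => /orP[]/eqP->.
      by exists y => //; rewrite inN inE.
    by exists x; [rewrite inN inE esym | rewrite setUC].
  case=> w wN ->; split; last exact: set21.
  rewrite inE; apply/existsP; exists v; apply/existsP; exists w.
  by move: wN; rewrite inN inE /= => ->; rewrite eqxx.
apply: card_in_imset => w1 w2 w1N w2N E.
have : w1 \in [set v; w2] by rewrite -E set22.
rewrite !inE => /orP[/eqP e1|/eqP //].
by move: w1N; rewrite inN e1 eirr andbF.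
Qed.

Lemma handshake : 2 * num_edges e = Dsum setT.
Proof.
rewrite /num_edges mulnC -sum_nat_const.
have -> : \sum_(i in edge_set e) 2 = \sum_(E in edge_set e) \sum_v (v \in E : nat).
  apply: eq_bigr => E /edge_card <-.
  by rewrite -sum1_card big_mkcond.
rewrite exchange_big /Dsum; apply: eq_big => [v|v _]; first by rewrite inE.
rewrite /deg -deg_edges -sum1_card [RHS]big_mkcond /= [LHS]big_mkcond /=.
by apply: eq_bigr => E _; set b := (E \in edge_set e); rewrite inE -/b; case: b; case: (v \in E).
Qed.

End G.

Theorem lemma3p4 (T : finType) (e : rel T) :
  simple_graph e -> 6 <= #|T| -> ~ contains_T62 e ->
  2 * num_edges e + (#|T| %% 5) * (5 - #|T| %% 5) <= 4 * #|T|.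
Proof.
move=> [esym eirr] _ nT.
rewrite (handshake esym eirr) -cardsT.
exact: (mainS esym eirr nT (leqnn _)).
Qed.
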